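(* Let $A$ be a non-zero Abelian group which is either a torsion group or a non-reduced group. If the endomorphism ring $\mathrm{End}\,A$ is centrally essential, then $\mathrm{End}\,A$ is commutative.
   Context: All rings are associative with non-zero identity. A ring $R$ is centrally essential if for every non-zero $a\in R$ there exist non-zero elements $x,y$ of the center of $R$ with $ax=y$. An Abelian group is reduced if it has no non-zero divisible subgroup, and non-reduced otherwise. *)

(* Defs.v *)
From HB Require Import structures.
From mathcomp Require Import all_boot all_order all_algebra.
Set Implicit Arguments. Unset Strict Implicit. Unset Printing Implicit Defensive.
Import GRing.Theory.
Local Open Scope ring_scope.

(* The endomorphism ring End A is the
   set of additive maps A -> A, with pointwise addition and composition as
   multiplication ((f g) v = f (g v)); equality of endomorphisms is pointwise. *)

Definition is_end (A : zmodType) (f : A -> A) : Prop :=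
  forall x y : A, f (x - y) = f x - f y.

Definition end_nonzero (A : zmodType) (f : A -> A) : Prop :=
  exists v : A, f v != 0.

Definition end_central (A : zmodType) (f : A -> A) : Prop :=
  is_end f /\ forall g : A -> A, is_end g -> f \o g =1 g \o f.

Definition end_centrally_essential (A : zmodType) : Prop :=
  forall a : A -> A, is_end a -> end_nonzero a ->
    exists x y : A -> A,
      [/\ end_central x, end_central y, end_nonzero x, end_nonzero y
        & a \o x =1 y].

Definition end_commutative (A : zmodType) : Prop :=
  forall f g : A -> A, is_end f -> is_end g -> f \o g =1 g \o f.

Definition torsion_group (A : zmodType) : Prop :=
  forall x : A, exists n : nat, (0 < n)%N /\ x *+ n = 0.

Definition is_subgroup (A : zmodType) (D : A -> Prop) : Prop :=
  D 0 /\ forall x y, D x -> D y -> D (x - y).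

Definition divisible_subgroup (A : zmodType) (D : A -> Prop) : Prop :=
  is_subgroup D /\
  forall x, D x -> forall n : nat, (0 < n)%N -> exists y, D y /\ y *+ n = x.

Definition non_reduced (A : zmodType) : Prop :=
  exists D : A -> Prop, divisible_subgroup D /\ exists x, D x /\ x != 0.

(* Main.v *)
Require Import Defs.
From mathcomp Require Import all_boot all_order all_algebra.
From mathcomp Require Import boolp classical_sets.
Set Implicit Arguments. Unset Strict Implicit. Unset Printing Implicit Defensive.
Import GRing.Theory Num.Theory Order.TTheory.
Local Open Scope ring_scope.

Section Basic.
Variable A : zmodType.
Implicit Types (f g h e : A -> A) (x y z : A).

Lemma end0 f : is_end f -> f 0 = 0.
Proof. by move=> hf; have := hf 0 0; rewrite subrr => ->; rewrite subrr. Qed.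

Lemma endN f x : is_end f -> f (- x) = - f x.
Proof. by move=> hf; rewrite -sub0r hf end0 // sub0r. Qed.

Lemma endD f x y : is_end f -> f (x + y) = f x + f y.
Proof. by move=> hf; have := hf x (- y); rewrite opprK => ->; rewrite (endN y hf) opprK. Qed.

Lemma endMn f x n : is_end f -> f (x *+ n) = f x *+ n.
Proof.
by move=> hf; elim: n => [|n IH]; rewrite ?mulr0n ?end0 // !mulrS endD // IH.
Qed.

Lemma endMz f x k : is_end f -> f (x *~ k) = f x *~ k.
Proof.
move=> hf; case: k => n; first by rewrite -!pmulrn endMn.
by rewrite !NegzE !mulrNz (endN _ hf) -!pmulrn endMn.
Qed.

Lemma end_comp f g : is_end f -> is_end g -> is_end (f \o g).
Proof. by move=> hf hg x y /=; rewrite hg hf. Qed.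

Lemma is_end_id : is_end (@id A).
Proof. by []. Qed.

Variable T : A -> Prop.
Hypothesis sgT : is_subgroup T.

Lemma sg0 : T 0. Proof. by case: sgT. Qed.
Lemma sgB x y : T x -> T y -> T (x - y). Proof. by case: sgT => _; apply. Qed.
Lemma sgN x : T x -> T (- x). Proof. by move=> Tx; rewrite -sub0r; apply: sgB => //; apply: sg0. Qed.
Lemma sgD x y : T x -> T y -> T (x + y).
Proof. by move=> Tx Ty; have := sgB Tx (sgN Ty); rewrite opprK. Qed.
Lemma sgMn x n : T x -> T (x *+ n).
Proof. by move=> Tx; elim: n => [|n IH]; [rewrite mulr0n; apply: sg0 | rewrite mulrS; apply: sgD]. Qed.
Lemma sgMz x k : T x -> T (x *~ k).
Proof.
move=> Tx; case: k => n; first by rewrite -pmulrn; apply: sgMn.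
by rewrite NegzE mulrNz -pmulrn; apply/sgN/sgMn.
Qed.

End Basic.

Section CIL.
Variable A : zmodType.

Lemma CIL (e h : A -> A) : end_centrally_essential A -> is_end e -> is_end h ->
  (forall v, e (h v) = h v) -> (forall v, h (e v) = 0) -> end_nonzero h -> False.
Proof.
move=> CE he hh ehh hee nzh.
have [x [y [[hx cx] [hy cy] _ [v yv] hxy]]] := CE h hh nzh.
have e1 : e (y v) = y v by rewrite -hxy /= ehh.
have e2 : y (e v) = 0.
  by rewrite -hxy /=; have /= -> := cx e he v; rewrite hee.
move: yv; rewrite -e1; have /= <- := cy e he v.
by rewrite e2 eqxx.
Qed.

End CIL.
Section Ext.
Variable A : zmodType.
Variable T : A -> Prop.
Hypothesis sgT : is_subgroup T.

Definition phg (G : set (A * A)) :=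
  [/\ G (0, 0),
      (forall x y x' y', G (x, y) -> G (x', y') -> G (x - x', y - y')),
      (forall y, G (0, y) -> y = 0)
    & (forall x y, G (x, y) -> T y)].

Section PhgLemmas.
Variable G : set (A * A).
Hypothesis hG : phg G.

Lemma phgN x y : G (x, y) -> G (- x, - y).
Proof. by case: hG => G00 GB _ _ Gxy; rewrite -sub0r -(sub0r y); apply: GB. Qed.

Lemma phgD x y x' y' : G (x, y) -> G (x', y') -> G (x + x', y + y').
Proof.
case: hG => _ GB _ _ h1 h2; have := GB _ _ _ _ h1 (phgN h2).
by rewrite !opprK.
Qed.

Lemma phgMn x y n : G (x, y) -> G (x *+ n, y *+ n).
Proof.
case: hG => G00 _ _ _ h; elim: n => [|n IH]; first by rewrite !mulr0n.
by rewrite !mulrS; apply: phgD.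
Qed.

Lemma phgMz x y k : G (x, y) -> G (x *~ k, y *~ k).
Proof.
move=> h; case: k => n; first by rewrite -!pmulrn; apply: phgMn.
by rewrite !NegzE !mulrNz -!pmulrn; apply/phgN/phgMn.
Qed.

Lemma phg_fun x y y' : G (x, y) -> G (x, y') -> y = y'.
Proof.
case: hG => _ GB G0 _ h1 h2; have := GB _ _ _ _ h1 h2; rewrite subrr => /G0.
by move/eqP; rewrite subr_eq0 => /eqP.
Qed.

End PhgLemmas.

Definition Baer (G0 : set (A * A)) :=
  forall G, phg G -> (forall q, G0 q -> G q) ->
  forall x (d : nat), (0 < d)%N ->
  (forall k : int, (exists t, G (x *~ k, t)) <-> (d%:Z %| k)%Z) ->
  forall t0, G (x *+ d, t0) -> exists tau, T tau /\ tau *+ d = t0.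

Lemma ext_G' (G : set (A * A)) x tau : phg G -> T tau ->
  (forall k t, G (x *~ k, t) -> t = tau *~ k) ->
  phg (fun q => exists s t k, G (s, t) /\ q = (s + x *~ k, t + tau *~ k)).
Proof.
move=> hG Ttau compat; have hG' := hG; case: hG' => G00 GB G0 GT; split.
- by exists 0, 0, 0; split => //; rewrite !mulr0z !addr0.
- move=> a b a' b' [s [t [k [Gst [-> ->]]]]] [s' [t' [k' [Gst' [-> ->]]]]].
  exists (s - s'), (t - t'), (k - k'); split; first by apply: GB.
  by congr pair; rewrite mulrzBr opprD addrACA.
- move=> y [s [t [k [Gst e]]]]; case: e => e1 e2.
  have hs : s = - (x *~ k) by apply/eqP; rewrite -addr_eq0 e1.
  have := phgN hG Gst; rewrite hs opprK => /compat ht.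
  by rewrite e2 -ht subrr.
- move=> a b [s [t [k [Gst e]]]]; case: e => _ ->; apply: sgD => //; first exact: GT Gst.
  exact: sgMz.
Qed.

Lemma int_abs_case (k : int) : k != 0 -> exists2 n : nat, (0 < n)%N & (k = n%:Z \/ k = - n%:Z).
Proof.
case: k => n.
- by move=> nz; exists n; [rewrite lt0n; apply: contraNneq nz => -> | left].
- by move=> _; exists n.+1 => //; right; rewrite NegzE.
Qed.

Lemma ext_step G0 (G : set (A * A)) : Baer G0 -> phg G -> (forall q, G0 q -> G q) ->
  forall x, (forall t, ~ G (x, t)) ->
  exists G', [/\ phg G', (forall q, G q -> G' q) & exists t, G' (x, t)].
Proof.
move=> hB hG G0G x nx.
suff [tau [Ttau compat]] : exists tau, T tau /\ (forall k t, G (x *~ k, t) -> t = tau *~ k).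
  exists (fun q => exists s t k, G (s, t) /\ q = (s + x *~ k, t + tau *~ k)); split.
  - exact: ext_G'.
  - by move=> [a b] Gab; exists a, b, 0; rewrite !mulr0z !addr0.
  - exists tau, 0, 0, 1; split; first by case: hG.
    by rewrite !mulr1z !add0r.
have [[k [knz [t Gkt]]] | none] := pselect (exists k : int, k != 0 /\ exists t, G (x *~ k, t)); last first.
  exists 0; split; first exact: sg0.
  move=> k t Gkt; have kz : k = 0.
    by apply/eqP; apply: contraT => knz; case: none; exists k; split => //; exists t.
  by move: Gkt; rewrite kz mulr0z mul0rz; case: hG => _ _ Gz _ /Gz.
pose Pn := fun n : nat => `[< (0 < n)%N /\ exists t, G (x *+ n, t) >].
have exP : exists n, Pn n.
  have [n n0 hk] := int_abs_case knz; exists n; apply/asboolP; split => //.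
  case: hk => hk; move: Gkt; rewrite hk.
    by rewrite -pmulrn => Gt; exists t.
  by rewrite mulrNz -pmulrn => /(phgN hG); rewrite opprK => Gt; exists (- t).
case: (ex_minnP exP) => d /asboolP [d0 [t0 Gd]] dmin.
have ideal : forall k : int, (exists t, G (x *~ k, t)) <-> (d%:Z %| k)%Z.
  move=> k'; split.
  - move=> [t' Gt']; apply/dvdz_mod0P.
    have := divz_eq k' d%:Z; set q := (k' %/ d)%Z; set r := (k' %% d)%Z => ek.
    have Gr : G (x *~ r, t' - t0 *~ q).
      have [_ GB _ _] := hG.
      have := GB _ _ _ _ Gt' (phgMz hG q Gd).
      by rewrite pmulrn mulrzA_C -mulrzBr {1}ek addrAC subrr add0r.
    have r0 : 0 <= r by apply: modz_ge0; rewrite eqz_nat -lt0n.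
    have rlt : r < d%:Z by apply: ltz_pmod; rewrite ltz_nat.
    apply/eqP; apply: contraT => rnz.
    have [n n0 [rn|rn]] := int_abs_case rnz; last first.
      by move: r0; rewrite rn oppr_ge0 lez_nat leqn0 => /eqP n00; move: n0; rewrite n00.
    have : (d <= n)%N.
      by apply: dmin; apply/asboolP; split => //; exists (t' - t0 *~ q); rewrite pmulrn -rn.
    by rewrite leqNgt -ltz_nat -rn rlt.
  - move=> /dvdzP [q ->]; exists (t0 *~ q).
    by rewrite -mulrzA_C -pmulrn; apply: phgMz.
have [tau [Ttau htau]] := hB G hG G0G x d d0 ideal t0 Gd.
exists tau; split => // k' t' Gt'.
have [hI _] := ideal k'; move: (hI (ex_intro _ t' Gt')) => /dvdzP [q kq].
move: Gt'; rewrite kq -mulrzA_C -pmulrn => Gq.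
have := phgMz hG q Gd => Gq'.
by rewrite (phg_fun hG Gq Gq') -mulrzA_C -pmulrn htau.
Qed.

End Ext.
Section Extend.
Variable A : zmodType.
Variable T : A -> Prop.
Hypothesis sgT : is_subgroup T.

Lemma extend (G0 : set (A * A)) : phg T G0 -> Baer T G0 ->
  exists f : A -> A, [/\ is_end f, (forall x y, G0 (x, y) -> f x = y) & forall x, T (f x)].
Proof.
move=> h0 hB.
pose P := fun M : set (A * A) => phg T (fun q => M q \/ G0 q).
have chainP : forall F : set (set (A * A)), (F `<=` P)%classic -> total_on F subset ->
    P (\bigcup_(X in F) X)%classic.
  move=> F FP Ftot.
  pose U := fun q => (\bigcup_(X in F) X)%classic q \/ G0 q.
  have UX : forall X, F X -> forall q, X q \/ G0 q -> U q.
    by move=> X FX q [Xq|G0q]; [left; exists X | right].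
  have two : forall q1 q2, U q1 -> U q2 ->
      exists Y, [/\ phg T Y, (forall q, Y q -> U q), Y q1 & Y q2].
    move=> q1 q2 [[X1 FX1 X1q]|G1] [[X2 FX2 X2q]|G2].
    - have [S12|S21] := Ftot _ _ FX1 FX2.
      + exists (fun q => X2 q \/ G0 q); split; [exact: FP | exact: UX | left; exact: S12 | by left].
      + exists (fun q => X1 q \/ G0 q); split; [exact: FP | exact: UX | by left | left; exact: S21].
    - exists (fun q => X1 q \/ G0 q); split; [exact: FP | exact: UX | by left | by right].
    - exists (fun q => X2 q \/ G0 q); split; [exact: FP | exact: UX | by right | by left].
    - exists G0; split => //; by move=> q; right.
  have [G00 _ _ _] := h0.
  split.
  - by right.
  - move=> x y x' y' U1 U2; have [Y [hY YU Y1 Y2]] := two _ _ U1 U2.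
    by apply: YU; case: hY => _ YB _ _; apply: YB.
  - move=> y U1; have [Y [hY YU Y1 _]] := two _ _ U1 U1.
    by case: hY => _ _ Y0 _; apply: Y0.
  - move=> x y U1; have [Y [hY YU Y1 _]] := two _ _ U1 U1.
    by case: hY => _ _ _ YT; apply: YT Y1.
have [M [PM maxM]] := Zorn_bigcup chainP.
pose G := fun q => M q \/ G0 q.
have hG : phg T G := PM.
have tot : forall x, exists t, G (x, t).
  move=> x; have [//|nx] := pselect (exists t, G (x, t)).
  have nx' : forall t, ~ G (x, t) by move=> t Gt; apply: nx; exists t.
  have [G' [hG' GG' [t' G't']]] := ext_step sgT hB hG (fun q h => or_intror h) nx'.
  exfalso; apply: (maxM G').
    split; first by move=> q Mq; apply: GG'; left.
    by move=> /(_ _ G't') Mx; apply: (nx' t'); left.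
  rewrite /P; have -> : (fun q => G' q \/ G0 q) = G'; last exact: hG'.
  apply: funext => q; apply: propext; split; last by left.
  by case=> // G0q; apply: GG'; right.
have [f hf] := choice tot.
exists f; split.
- move=> x y; have [_ GB _ _] := hG.
  have H2 := phg_fun hG (hf (x - y)); apply: H2; apply: GB; apply: hf.
- by move=> x y G0xy; have H2 := phg_fun hG (hf x); apply: H2; right.
- by move=> x; have [_ _ _ GT] := hG; apply: GT (hf x).
Qed.

End Extend.

Section Divisible.
Variable A : zmodType.

Lemma extend_div (E : A -> Prop) (G0 : set (A * A)) : divisible_subgroup E -> phg E G0 ->
  exists f : A -> A, [/\ is_end f, (forall x y, G0 (x, y) -> f x = y) & forall x, E (f x)].
Proof.
move=> [sgE dE] h0; apply: extend => //.
move=> G hG _ x d d0 _ t0 Gt0.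
have [_ _ _ GT] := hG.
by have [y [Ey yd]] := dE t0 (GT _ _ Gt0) d d0; exists y.
Qed.

Lemma DC (E : A -> Prop) (w z : A) : end_centrally_essential A ->
  divisible_subgroup E -> E w -> w != 0 ->
  (forall k : int, E (z *~ k) -> w *~ k = 0) -> False.
Proof.
move=> CE dE Ew wnz hz.
have sgE := dE.1.
pose G1 := fun q : A * A => E q.1 /\ q.2 = q.1.
have h1 : phg E G1.
  split.
  - by split => //; apply: sg0.
  - by move=> x y x' y' [/= Ex /= ->] [/= Ex' /= ->]; split => //; apply: sgB.
  - by move=> y [_ /= ->].
  - by move=> x y [Ex /= ->].
have [e [he eE eT]] := extend_div dE h1.
pose G2 := fun q : A * A => exists y k, E y /\ q = (y + z *~ k, w *~ k).
have h2 : phg E G2.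
  split.
  - by exists 0, 0; split; [apply: sg0 | rewrite !mulr0z addr0].
  - move=> a b a' b' [y [k [Ey e1]]] [y' [k' [Ey' e2]]].
    case: e1 => -> ->; case: e2 => -> ->.
    exists (y - y'), (k - k'); split; first exact: sgB.
    by congr pair; rewrite ?mulrzBr // opprD addrACA.
  - move=> b [y [k [Ey e1]]]; case: e1 => e1 ->.
    apply: hz; have -> : z *~ k = - y by apply/eqP; rewrite -addr_eq0 addrC -e1.
    exact: sgN.
  - move=> a b [y [k [Ey e1]]]; case: e1 => _ ->; exact: sgMz.
have [h [hh hG2 hE]] := extend_div dE h2.
apply: (CIL CE he hh).
- by move=> v; apply: eE; split => //; apply: hE.
- move=> v; apply: hG2; exists (e v), 0; split; first exact: eT.
  by rewrite !mulr0z addr0.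
- exists z; rewrite (hG2 z w) //; exists 0, 1; split; first exact: sg0.
  by rewrite !mulr1z add0r.
Qed.

End Divisible.
Section NumTh.
Variable A : zmodType.

Lemma mulrz_natmul (b : A) (c : int) (n : nat) : b *~ c *+ n = b *~ (c * n%:Z).
Proof. by rewrite pmulrn mulrzA. Qed.

Lemma ann_gcd (b : A) (N : nat) (c : int) :
  b *+ N = 0 -> b *~ c = 0 -> b *+ gcdn `|c|%N N = 0.
Proof.
move=> hN hc; case: (Bezoutz c N%:Z) => u [v huv].
have : b *~ gcdz c N%:Z = 0.
  by rewrite -huv mulrzDr -!mulrzA_C hc -pmulrn hN !mul0rz addr0.
by rewrite /gcdz absz_nat pmulrn.
Qed.

Lemma ann_dvd (b : A) (N : nat) (c : int) :
  b *+ N = 0 -> (N%:Z %| c)%Z -> b *~ c = 0.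
Proof. by move=> hN /dvdzP [q ->]; rewrite -mulrzA_C -pmulrn hN mul0rz. Qed.

Variable p : nat.
Hypothesis pp : prime p.

Lemma ordp (b : A) (j : nat) : b *+ p ^ j.+1 = 0 -> b *+ p ^ j != 0 ->
  forall c : int, b *~ c = 0 -> ((p ^ j.+1)%:Z %| c)%Z.
Proof.
move=> h1 h2 c hc; have hg := ann_gcd h1 hc.
have [i ij gi] := elimT (dvdn_pfactor _ _ pp) (dvdn_gcdr `|c|%N (p ^ j.+1)).
move: ij; rewrite leq_eqVlt => /orP [/eqP ij | ij].
  have : (gcdn `|c|%N (p ^ j.+1) %| `|c|%N)%N by apply: dvdn_gcdl.
  by rewrite gi ij dvdzE.
exfalso; move/negP: h2; apply.
have -> : (p ^ j = p ^ i * p ^ (j - i))%N by rewrite -expnD subnKC.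
by rewrite mulrnA -gi hg mul0rn.
Qed.

Lemma inv_modp (k : int) : ~~ (p%:Z %| k)%Z -> exists s : int, (p%:Z %| s * k - 1)%Z.
Proof.
move=> nk; case: (Bezoutz k p%:Z) => u [v huv].
have g1 : gcdz k p%:Z = 1.
  rewrite /gcdz absz_nat gcdnC.
  have : coprime p `|k|%N by rewrite prime_coprime // -dvdzE.
  by rewrite /coprime => /eqP ->.
exists u; apply/dvdzP; exists (- v).
by rewrite g1 in huv; rewrite -huv opprD addrA subrr add0r mulNr.
Qed.

Lemma inv_modp_el (z : A) (k : int) : z *+ p = 0 -> ~~ (p%:Z %| k)%Z ->
  exists s : int, z = (z *~ k) *~ s.
Proof.
move=> hz /inv_modp [s hs]; exists s.
have := ann_dvd hz hs; rewrite mulrzBr mulr1z => /eqP; rewrite subr_eq0 => /eqP e.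
by rewrite mulrzA_C e.
Qed.

End NumTh.
Section CaseB.
Variable A : zmodType.
Variable p : nat.
Hypothesis pp : prime p.

Lemma mulrnz (b : A) (n : nat) (c : int) : b *+ n *~ c = b *~ (c * n%:Z).
Proof. by rewrite pmulrn mulrzA_C. Qed.

Lemma p_gt0 : (0 < p)%N. Proof. exact: prime_gt0. Qed.

Lemma caseB (u v : A) : end_centrally_essential A ->
  u *+ p = 0 -> v *+ p = 0 -> u != 0 -> ~ (exists c, v = u *~ c) ->
  (forall w : A, w *+ p = 0 -> forall m, exists b : A, b *+ p ^ m = w) -> False.
Proof.
move=> CE hu hv unz nex Hb.
have pdiv : forall k (x : A), x *+ p ^ k = 0 -> forall m, exists b : A, b *+ p ^ m = x.
  elim=> [|k IH] x hx m.
    by move: hx; rewrite expn0 mulr1n => ->; exists 0; exact: mul0rn.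
  have hx' : (x *+ p) *+ p ^ k = 0 by rewrite -mulrnA -expnS.
  have [b hb] := IH _ hx' m.+1.
  have : (x - b *+ p ^ m) *+ p = 0 by rewrite mulrnBl -mulrnA -expnSr hb subrr.
  move=> /Hb /(_ m) [b' hb']; exists (b + b').
  by rewrite mulrnDl hb' addrC subrK.
have half : forall k (x : A), x *+ p ^ k = 0 -> exists y : A, y *+ p = x /\ y *+ p ^ k.+1 = 0.
  move=> k x hx; have [b hb] := pdiv _ _ hx k.+1; exists (b *+ p ^ k); split.
    by rewrite -mulrnA -expnSr hb.
  by rewrite mulrnAC hb.
pose pel (x : A) := exists k, x *+ p ^ k = 0.
have hvv : forall x : A, exists y : A, pel x -> y *+ p = x /\ pel y.
  move=> x; have [[k hk]|np] := pselect (pel x); last by exists 0.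
  have [y [y1 y2]] := half _ _ hk; exists y => _; split => //; by exists k.+1.
have [hf hhf] := choice hvv.
pose us j := iter j hf u.
have pel_us : forall j, pel (us j).
  elim=> [|j IH]; first by exists 1%N; rewrite expn1.
  by have [_ ?] := hhf _ IH.
have step : forall j, us j.+1 *+ p = us j by move=> j; have [? _] := hhf _ (pel_us j).
have up : forall i j, us (j + i)%N *+ p ^ i = us j.
  elim=> [|i IH] j; first by rewrite addn0 expn0 mulr1n.
  by rewrite addnS expnS mulrnA step IH.
have uj1 : forall j, us j *+ p ^ j = u by move=> j; have := up j 0%N; rewrite add0n.
have uj2 : forall j, us j *+ p ^ j.+1 = 0 by move=> j; rewrite expnSr mulrnA uj1.
pose U := fun x : A => exists j c, x = us j *~ c.
have sgU : is_subgroup U.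
  split; first by exists 0%N, 0; rewrite mulr0z.
  move=> x y [j [c ->]] [j' [c' ->]].
  exists (j + j')%N, (c * (p ^ j')%:Z - c' * (p ^ j)%:Z).
  rewrite mulrzBr -!mulrnz up.
  by rewrite addnC up.
have dU : divisible_subgroup U.
  split => // x [j [c ->]] n n0.
  have [m cpm nE] := pfactor_coprime pp n0.
  set l := logn p n in nE.
  case: (Bezoutz m%:Z (p ^ j.+1)%:Z) => u1 [v1 huv].
  have g1 : gcdz m%:Z (p ^ j.+1)%:Z = 1.
    rewrite /gcdz !absz_nat.
    have : coprime m (p ^ j.+1) by rewrite coprime_sym; apply: coprimeXl.
    by rewrite /coprime => /eqP ->.
  rewrite g1 in huv.
  exists (us (j + l)%N *~ (c * u1)); split; first by exists (j + l)%N, (c * u1).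
  have e1 : us (j + l)%N *~ (c * u1) *+ n = us j *~ (c * u1 * m%:Z).
    by rewrite mulrz_natmul -[us j](up l j) mulrnz nE PoszM mulrA.
  have e2 : u1 * m%:Z = 1 - v1 * (p ^ j.+1)%:Z by rewrite -huv addrK.
  have h0 : us j *~ (c * (v1 * (p ^ j.+1)%:Z)) = 0.
    by apply: (ann_dvd (uj2 j)); apply/dvdzP; exists (c * v1); rewrite mulrA.
  by rewrite e1 -mulrA e2 mulrBr mulr1 mulrzBr h0 subr0.
apply: (@DC A U u v CE dU) => //.
  by exists 0%N, 1; rewrite mulr1z.
move=> k Uk; have [pk|npk] := boolP (p%:Z %| k)%Z; first exact: ann_dvd hu pk.
have [s vs] := inv_modp_el pp hv npk.
have : U v by rewrite vs; apply: sgMz.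
move=> [j [c vE]]; exfalso; apply: nex.
have hc : us j *~ (c * p%:Z) = 0 by rewrite -mulrz_natmul -vE.
have nz : us j *+ p ^ j != 0 by rewrite uj1.
have := ordp pp (uj2 j) nz hc.
rewrite expnSr PoszM dvdz_mul2r; last by rewrite eqz_nat -lt0n p_gt0.
move=> /dvdzP [q cq]; exists q.
by rewrite vE cq -mulrnz uj1.
Qed.

End CaseB.
Section CaseA.
Variable A : zmodType.
Variable p : nat.
Hypothesis pp : prime p.

Lemma end_sub (f g : A -> A) : is_end f -> is_end g -> is_end (fun x => f x - g x).
Proof. by move=> hf hg x y; rewrite hf hg !opprD !opprK addrACA. Qed.

Lemma caseA (u v : A) : end_centrally_essential A ->
  u *+ p = 0 -> v *+ p = 0 -> u != 0 -> ~ (exists c, v = u *~ c) ->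
  forall (w : A) m, w *+ p = 0 -> ~ (exists b : A, b *+ p ^ m = w) -> False.
Proof.
move=> CE hu hv unz nex w m hw nwm.
pose Pm := fun m => `[< ~ exists b : A, b *+ p ^ m = w >].
have exP : exists m, Pm m by exists m; apply/asboolP.
case: (ex_minnP exP) => m0 /asboolP nm0 mmin.
case: m0 nm0 mmin => [|n] nm0 mmin.
  by exfalso; apply: nm0; exists w; rewrite expn0 mulr1n.
have [a ha] : exists a : A, a *+ p ^ n = w.
  have [//|na] := pselect (exists a : A, a *+ p ^ n = w).
  have /mmin : Pm n by apply/asboolP.
  by rewrite ltnn.
have wnz : w != 0 by apply/eqP => w0; apply: nm0; exists 0; rewrite mul0rn w0.
pose N := (p ^ n.+1)%N.
have aN : a *+ N = 0 by rewrite /N expnSr mulrnA ha hw.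
have an : a *+ p ^ n != 0 by rewrite ha.
have ordA : forall c, a *~ c = 0 -> (N%:Z %| c)%Z := ordp pp aN an.
have pure : forall (k : int) (y : A), a *~ k = y *+ N -> a *~ k = 0.
  move=> k y hk; have [->|knz] := eqVneq k 0; first exact: mulr0z.
  have [K K0 hK] := int_abs_case knz.
  have [y' hy'] : exists y' : A, a *+ K = y' *+ N.
    case: hK => hK; move: hk; rewrite hK.
      by rewrite -pmulrn => ->; exists y.
    rewrite mulrNz -pmulrn => /eqP; rewrite eqr_oppLR => /eqP ->.
    by exists (- y); rewrite mulNrn.
  suff aK : a *+ K = 0 by case: hK => ->; rewrite ?mulrNz -pmulrn aK ?oppr0.
  have [m1 cpm KE] := pfactor_coprime pp K0.
  set l := logn p K in KE.
  have [nl|ln] := leqP n.+1 l.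
    by rewrite KE -(subnKC nl) expnD mulnCA mulrnA aN mul0rn.
  exfalso; apply: nm0.
  have lnn : (l <= n)%N by rewrite -ltnS.
  have e1 : w *+ m1 = (y' *+ p ^ (n - l)) *+ N.
    have eK : (p ^ n * m1 = K * p ^ (n - l))%N.
      by rewrite KE -{1}(subnKC lnn) expnD mulnAC [(p ^ l * m1)%N]mulnC.
    by rewrite -ha -mulrnA eK mulrnA hy' mulrnAC.
  have npm : ~~ (p%:Z %| m1%:Z)%Z by rewrite dvdzE !absz_nat -prime_coprime.
  have [s ws] := inv_modp_el pp hw npm.
  exists ((y' *+ p ^ (n - l)) *~ s).
  by rewrite ws -(pmulrn w m1) e1 mulrz_natmul [RHS]mulrnz.
pose T := fun t : A => exists c, t = a *~ c.
have sgT : is_subgroup T.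
  split; first by exists 0; rewrite mulr0z.
  by move=> x y [c ->] [c' ->]; exists (c - c'); rewrite mulrzBr.
pose G0 := fun q : A * A => exists k (y : A), q = (a *~ k + y *+ N, a *~ k).
have h0 : phg T G0.
  split.
  - by exists 0, 0; rewrite mulr0z mul0rn addr0.
  - move=> x y x' y' [k [z e1]] [k' [z' e2]]; case: e1 => -> ->; case: e2 => -> ->.
    exists (k - k'), (z - z'); congr pair; last by rewrite mulrzBr.
    by rewrite mulrzBr mulrnBl opprD addrACA.
  - move=> b [k [y e1]]; case: e1 => e1 ->.
    apply: (pure k (- y)); rewrite mulNrn; apply/eqP; rewrite -addr_eq0 -e1.
    done.
  - by move=> x y [k [z e1]]; case: e1 => _ ->; exists k.
have hB : Baer T G0.
  move=> G hG G0G x d d0 ideal t0 Gd.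
  have GN : G (x *~ N%:Z, 0).
    by apply: G0G; exists 0, x; rewrite mulr0z add0r -pmulrn.
  have : (d%:Z %| N%:Z)%Z by apply/(ideal N%:Z); exists 0.
  rewrite dvdzE !absz_nat => /dvdnP [q Nq].
  have [_ _ _ GT] := hG; have [c tc] := GT _ _ Gd.
  have Gq := phgMn hG q Gd.
  have : t0 *+ q = 0.
    apply: (phg_fun hG Gq); move: GN; rewrite -pmulrn -mulrnA mulnC -Nq.
    done.
  rewrite tc mulrz_natmul => /ordA; rewrite Nq PoszM [q%:Z * _]mulrC dvdz_mul2r; last first.
    have N0 : (0 < N)%N by rewrite expn_gt0 prime_gt0.
    by rewrite eqz_nat; apply/eqP => q0; move: N0; rewrite Nq q0.
  move=> /dvdzP [c' cd]; exists (a *~ c'); split; first by exists c'.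
  by rewrite cd mulrz_natmul.
have [pi [hpi piG0 piT]] := extend sgT h0 hB.
have pia : pi a = a.
  by apply: piG0; exists 1, 0; rewrite mulr1z mul0rn addr0.
have pipi : forall x, pi (pi x) = pi x.
  by move=> x; have [c ->] := piT x; rewrite endMz // pia.
have [z [hz nzw]] : exists z : A, z *+ p = 0 /\ ~ (exists c, z = w *~ c).
  have [[c uc]|nu] := pselect (exists c, u = w *~ c); last by exists u.
  exists v; split => // [[c' vc]]; apply: nex.
  have npc : ~~ (p%:Z %| c)%Z.
    apply/negP => pc; move/eqP: unz; apply; rewrite uc; exact: ann_dvd hw pc.
  have [s ws] := inv_modp_el pp hw npc.
  by exists (c' * s); rewrite vc ws -uc mulrzA_C.
pose z' := z - pi z.
have [c0 pc0] := piT z.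
have : a *~ (c0 * p%:Z) = 0.
  by rewrite -mulrz_natmul -pc0 -endMn // hz end0.
move=> /ordA; rewrite /N expnSr PoszM dvdz_mul2r; last by rewrite eqz_nat -lt0n prime_gt0.
move=> /dvdzP [q c0q].
have hz' : z' *+ p = 0 by rewrite /z' mulrnBl -(endMn z p hpi) hz (end0 hpi) subrr.
have z'nz : z' != 0.
  apply/eqP => z0; apply: nzw; exists q.
  by move/eqP: z0; rewrite subr_eq0 => /eqP ->; rewrite pc0 c0q -mulrnz ha.
have pz' : pi z' = 0 by rewrite /z' hpi pipi subrr.
have transfer : forall c, a *~ c = 0 -> z' *~ c = 0.
  move=> c /ordA /dvdzP [r ->]; rewrite /N expnSr PoszM mulrA.
  by apply: (ann_dvd hz'); apply/dvdzP; exists (r * (p ^ n)%:Z).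
have [coef hcoef] := choice piT.
pose h := fun x => z' *~ coef x.
have hh : is_end h.
  move=> x y; rewrite /h; apply/eqP; rewrite -subr_eq0 -!mulrzBr; apply/eqP.
  by apply: transfer; rewrite !mulrzBr -!hcoef hpi subrr.
pose e := fun x => x - pi x.
have he : is_end e by apply: end_sub.
apply: (CIL CE he hh).
- by move=> x; rewrite /e /h endMz // pz' mul0rz subr0.
- move=> x; apply: transfer; rewrite -hcoef /e.
  by rewrite hpi pipi subrr.
- exists a; rewrite /h.
  have : a *~ (coef a - 1) = 0 by rewrite mulrzBr -hcoef pia mulr1z subrr.
  move=> /transfer; rewrite mulrzBr mulr1z => /eqP; rewrite subr_eq0 => /eqP ->.
  done.
Qed.

End CaseA.
Section TorsionPart.
Variable A : zmodType.
Hypothesis CE : end_centrally_essential A.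

Lemma R1 p (pp : prime p) (u v : A) : u *+ p = 0 -> v *+ p = 0 -> u != 0 ->
  exists c, v = u *~ c.
Proof.
move=> hu hv unz; have [//|nex] := pselect (exists c, v = u *~ c); exfalso.
have [[w [m [hw nw]]]|nb] :=
  pselect (exists (w : A) m, w *+ p = 0 /\ ~ exists b : A, b *+ p ^ m = w).
  exact: (caseA pp CE hu hv unz nex hw nw).
apply: (caseB pp CE hu hv unz nex) => w hw m.
have [//|nb'] := pselect (exists b : A, b *+ p ^ m = w).
by exfalso; apply: nb; exists w, m.
Qed.

Lemma lemC p (pp : prime p) k : forall x y : A,
  x *+ p ^ k.+1 = 0 -> x *+ p ^ k != 0 -> y *+ p ^ k.+1 = 0 -> exists c, y = x *~ c.
Proof.
elim: k => [|k IH] x y h1 h2 h3.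
  by rewrite expn1 in h1 h3; rewrite expn0 mulr1n in h2; exact: (R1 pp h1 h3 h2).
have h1' : (x *+ p) *+ p ^ k.+1 = 0 by rewrite -mulrnA -expnS.
have h2' : (x *+ p) *+ p ^ k != 0 by rewrite -mulrnA -expnS.
have h3' : (y *+ p) *+ p ^ k.+1 = 0 by rewrite -mulrnA -expnS.
have [c hc] := IH _ _ h1' h2' h3'.
have hyc : (y - x *~ c) *+ p = 0 by rewrite mulrnBl hc mulrnz mulrz_natmul subrr.
have hu : (x *+ p ^ k.+1) *+ p = 0 by rewrite -mulrnA -expnSr.
have [e he] := R1 pp hu hyc h2.
by exists (c + e * (p ^ k.+1)%:Z); rewrite mulrzDr -mulrnz -he addrC subrK.
Qed.

Lemma pelem p (pp : prime p) k (x : A) (f : A -> A) : is_end f ->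
  x *+ p ^ k = 0 -> exists c, f x = x *~ c.
Proof.
move=> hf hx.
have exP : exists j, x *+ p ^ j == 0 by exists k; apply/eqP.
case: (ex_minnP exP) => j /eqP hj jmin.
case: j hj jmin => [|i] hj jmin.
  by move: hj; rewrite expn0 mulr1n => ->; exists 0; rewrite (end0 hf) mulr0z.
have nz : x *+ p ^ i != 0 by apply/negP => /jmin; rewrite ltnn.
apply: (lemC pp hj nz); by rewrite -endMn // hj end0.
Qed.

Lemma torsion_scalar (f : A -> A) : is_end f ->
  forall n (x : A), (0 < n)%N -> x *+ n = 0 -> exists c, f x = x *~ c.
Proof.
move=> hf n; elim: n {-2}n (leqnn n) => [|N IH] n hn x.
  by move=> n0; move: hn n0; rewrite leqn0 => /eqP ->.
move=> n0 hx.
have [n1|n1] := leqP n 1%N.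
  have n1' : n = 1%N by apply/eqP; rewrite eqn_leq n1 n0.
  by move: hx; rewrite n1' mulr1n => ->; exists 0; rewrite (end0 hf) mulr0z.
pose p := pdiv n; have pp : prime p by apply: pdiv_prime.
have [m cpm nE] := pfactor_coprime pp n0.
set l := logn p n in nE.
have l0 : (0 < l)%N by rewrite logn_gt0 mem_primes pp n0 pdiv_dvd.
have [m1|m1] := leqP m 1%N.
  have m1' : m = 1%N.
    apply/eqP; rewrite eqn_leq m1 lt0n; apply/eqP => m0; move: n0; rewrite nE m0.
    done.
  by apply: (pelem pp hf (k := l)); rewrite -hx nE m1' mul1n.
pose r := (p ^ l)%N.
have r1 : (1 < r)%N.
  by rewrite /r -{1}(expn0 p) ltn_exp2l ?prime_gt1.
have mlt : (m < n)%N by rewrite nE ltn_Pmulr // ltnW.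
have rlt : (r < n)%N by rewrite nE ltn_Pmull // ltnW.
have cop : coprime r m by apply: coprimeXl.
case: (Bezoutz r%:Z m%:Z) => u1 [v1 huv].
have g1 : gcdz r%:Z m%:Z = 1 by rewrite /gcdz !absz_nat; apply/eqP.
rewrite g1 in huv.
have hxr : (x *+ r) *+ m = 0 by rewrite -mulrnA mulnC -nE.
have hxm : (x *+ m) *+ r = 0 by rewrite -mulrnA -nE.
have mN : (m <= N)%N by rewrite -ltnS (leq_trans mlt hn).
have rN : (r <= N)%N by rewrite -ltnS (leq_trans rlt hn).
have [c1 e1] := IH m mN _ (ltnW m1) hxr.
have [c2 e2] := IH r rN _ (ltnW r1) hxm.
have xe : x = x *+ r *~ u1 + x *+ m *~ v1 by rewrite !mulrnz -mulrzDr huv mulr1z.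
have := congr1 f xe; rewrite endD // !(endMz _ _ hf) e1 e2 => ->.
by eexists; rewrite !mulrnz !mulrzA_C -mulrzDr.
Qed.

Lemma torsion_comm (f g : A -> A) (x : A) : is_end f -> is_end g ->
  (exists2 n, (0 < n)%N & x *+ n = 0) -> f (g x) = g (f x).
Proof.
move=> hf hg [n n0 hx].
have [a ea] := torsion_scalar hf n0 hx.
have [b eb] := torsion_scalar hg n0 hx.
by rewrite eb (endMz _ _ hf) ea (endMz _ _ hg) eb !mulrzA_C mulrC.
Qed.

End TorsionPart.
Section TorLemmas.
Variable A : zmodType.
Implicit Types x y z : A.

Definition tor x := exists2 n, (0 < n)%N & x *+ n = 0.

Lemma tor0 : tor 0. Proof. by exists 1%N; rewrite ?mul0rn. Qed.

Lemma torB x y : tor x -> tor y -> tor (x - y).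
Proof.
move=> [n n0 hx] [m m0 hy]; exists (n * m)%N; first by rewrite muln_gt0 n0.
by rewrite mulrnBl mulrnA hx mul0rn mulnC mulrnA hy mul0rn subrr.
Qed.

Lemma torN x : tor x -> tor (- x).
Proof. by move=> tx; rewrite -sub0r; apply: torB => //; apply: tor0. Qed.

Lemma torD x y : tor x -> tor y -> tor (x + y).
Proof. by move=> tx ty; rewrite -[y]opprK; apply: torB => //; apply: torN. Qed.

Lemma torMz x k : tor x -> tor (x *~ k).
Proof. by move=> [n n0 hx]; exists n => //; rewrite mulrz_natmul -mulrnz hx mul0rz. Qed.

Lemma tor_end (f : A -> A) x : is_end f -> tor x -> tor (f x).
Proof. by move=> hf [n n0 hx]; exists n => //; rewrite -endMn // hx end0. Qed.

Lemma tor_divz x (k : int) : k != 0 -> tor (x *~ k) -> tor x.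
Proof.
move=> knz [n n0 hx]; move: hx; rewrite mulrz_natmul => hx.
have kn : k * n%:Z != 0 by rewrite mulf_neq0 // eqz_nat -lt0n.
have [K K0 hK] := int_abs_case kn; exists K => //.
case: hK => hK; move: hx; rewrite hK ?mulrNz -pmulrn //.
by move/eqP; rewrite oppr_eq0 => /eqP.
Qed.

Definition eqT x y := tor (x - y).

Lemma eqT_refl x : eqT x x. Proof. by rewrite /eqT subrr; apply: tor0. Qed.
Lemma eqT_eq x y : x = y -> eqT x y. Proof. by move=> ->; apply: eqT_refl. Qed.
Lemma eqT_sym x y : eqT x y -> eqT y x.
Proof. by rewrite /eqT => /torN; rewrite opprB. Qed.
Lemma eqT_trans x y z : eqT x y -> eqT y z -> eqT x z.
Proof. by rewrite /eqT => h1 h2; have := torD h1 h2; rewrite addrA subrK. Qed.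
Lemma eqT_Mz x y k : eqT x y -> eqT (x *~ k) (y *~ k).
Proof. by rewrite /eqT -mulrzBl; apply: torMz. Qed.
Lemma eqT_end (f : A -> A) x y : is_end f -> eqT x y -> eqT (f x) (f y).
Proof. by move=> hf; rewrite /eqT -hf; apply: tor_end. Qed.

End TorLemmas.
Lemma eqT_B (A : zmodType) (a b c d : A) : eqT a b -> eqT c d -> eqT (a - c) (b - d).
Proof.
rewrite /eqT => h1 h2; have := torB h1 h2.
suff -> : a - c - (b - d) = a - b - (c - d) by [].
by rewrite !opprD !opprK [LHS]addrACA.
Qed.

Section NonTorsion.
Variable A : zmodType.
Hypothesis CE : end_centrally_essential A.
Variable D : A -> Prop.
Hypothesis dD : divisible_subgroup D.
Variables x0 x1 : A.
Hypothesis Dx0 : D x0.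
Hypothesis x0nz : x0 != 0.
Hypothesis nt1 : ~ tor x1.

Lemma G1 : exists d, D d /\ ~ tor d.
Proof.
have [//|nd] := pselect (exists d, D d /\ ~ tor d); exfalso.
have allt : forall d, D d -> tor d.
  by move=> d Dd; have [//|nt] := pselect (tor d); case: nd; exists d.
apply: (@DC A D x0 x1 CE dD Dx0 x0nz) => k Dk.
have [->|knz] := eqVneq k 0; first by rewrite mulr0z.
by case: nt1; apply: (tor_divz knz); apply: allt.
Qed.

Lemma G2 : forall x, exists y, D y /\ eqT x y.
Proof.
have [d [Dd ntd]] := G1.
move=> x; have [//|nx] := pselect (exists y, D y /\ eqT x y); exfalso.
have dnz : d != 0 by apply/eqP => d0; apply: ntd; rewrite d0; apply: tor0.
apply: (@DC A D d x CE dD Dd dnz) => k Dk.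
have [->|knz] := eqVneq k 0; first by rewrite mulr0z.
have [K K0 hK] := int_abs_case knz.
have DK : D (x *+ K).
  case: hK => hK; move: Dk; rewrite hK ?mulrNz -pmulrn // => /(sgN dD.1).
  by rewrite opprK.
have [y [Dy yK]] := dD.2 _ DK K K0.
by case: nx; exists y; split => //; exists K => //; rewrite mulrnBl yK subrr.
Qed.

Lemma G3 : forall y1 y2 : A, ~ tor y1 ->
  exists m k, m != 0 /\ eqT (y2 *~ m) (y1 *~ k).
Proof.
move=> y1 y2 nt; have [y1' [Dy1' t1]] := G2 y1.
have [//|nr] := pselect (exists m k, m != 0 /\ eqT (y2 *~ m) (y1 *~ k)); exfalso.
pose E := fun z : A => D z /\ exists n k, n != 0 /\ eqT (z *~ n) (y1' *~ k).
have sgE : is_subgroup E.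
  split.
    split; first exact: (sg0 dD.1).
    by exists 1, 0; split => //; rewrite mulr0z mul0rz; apply: eqT_refl.
  move=> z1 z2 [D1 [n1 [k1 [n1nz h1]]]] [D2 [n2 [k2 [n2nz h2]]]].
  split; first exact: (sgB dD.1).
  exists (n1 * n2), (k1 * n2 - k2 * n1); split; first by rewrite mulf_neq0.
  have e1 : (z1 - z2) *~ (n1 * n2) = z1 *~ n1 *~ n2 - z2 *~ n2 *~ n1.
    by rewrite mulrzBl -!mulrzA [n2 * n1]mulrC.
  have e2 : y1' *~ (k1 * n2 - k2 * n1) = y1' *~ k1 *~ n2 - y1' *~ k2 *~ n1.
    by rewrite mulrzBr -!mulrzA.
  by rewrite e1 e2; apply: eqT_B; apply: eqT_Mz.
have dE : divisible_subgroup E.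
  split => // z [Dz [n [k [nnz h]]]] m m0.
  have [y [Dy ym]] := dD.2 z Dz m m0.
  exists y; split => //; split => //; exists (m%:Z * n), k; split.
    by rewrite mulf_neq0 // eqz_nat -lt0n.
  by rewrite mulrzA -pmulrn ym.
have y1'nz : y1' != 0.
  by apply/eqP => y0; apply: nt; move: t1; rewrite /eqT y0 subr0.
have Ey1' : E y1' by split => //; exists 1, 1; split => //; apply: eqT_refl.
apply: (@DC A E y1' y2 CE dE Ey1' y1'nz) => k [Dk [n [k' [nnz h]]]].
have [->|knz] := eqVneq k 0; first by rewrite mulr0z.
case: nr; exists (k * n), k'; split; first by rewrite mulf_neq0.
rewrite mulrzA; apply: (eqT_trans h); apply: eqT_Mz; exact: eqT_sym.
Qed.

Lemma main_nt (f g : A -> A) : is_end f -> is_end g -> forall x, f (g x) = g (f x).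
Proof.
move=> hf hg.
pose c := fun x => f (g x) - g (f x).
have hc : is_end c by apply: end_sub; apply: end_comp.
have ckill : forall t, tor t -> c t = 0.
  by move=> t tt; rewrite /c (torsion_comm CE hf hg tt) subrr.
have ctor : forall x, tor (c x).
  move=> x; have [tx|ntx] := pselect (tor x); first by rewrite ckill //; apply: tor0.
  have [m [k [mnz hm]]] := G3 (f x) ntx.
  have [m' [k' [m'nz hm']]] := G3 (g x) ntx.
  apply: (@tor_divz _ _ (m * m')); first by rewrite mulf_neq0.
  rewrite /c mulrzBl; apply: (@eqT_trans _ _ (x *~ k *~ k')).
    rewrite [m * m']mulrC mulrzA -(endMz _ _ hf).
    apply: (@eqT_trans _ _ (f (x *~ k') *~ m)).
      by apply: eqT_Mz; apply: eqT_end.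
    rewrite (endMz _ _ hf) mulrzAC; exact: eqT_Mz.
  apply: eqT_sym; rewrite mulrzA -(endMz _ _ hg).
  apply: (@eqT_trans _ _ (g (x *~ k) *~ m')).
    by apply: eqT_Mz; apply: eqT_end.
  rewrite (endMz _ _ hg) (mulrzAC m' k) (mulrzAC k' k); exact: eqT_Mz.
pose E := fun y => exists x, y = c x.
have sgE : is_subgroup E.
  split; first by exists 0; rewrite (end0 hc).
  by move=> _ _ [a ->] [b ->]; exists (a - b); rewrite hc.
have dE : divisible_subgroup E.
  split => // _ [x ->] n n0.
  have [y' [Dy' ty']] := G2 x.
  have cxy : c x = c y'.
    by apply/eqP; rewrite -subr_eq0 -hc; apply/eqP; apply: ckill.
  have [y'' [Dy'' hy'']] := dD.2 y' Dy' n n0.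
  by exists (c y''); split; [exists y'' | rewrite -(endMn _ _ hc) hy''].
move=> x; apply/eqP; rewrite -subr_eq0; apply/negPn/negP => cnz.
have Ecx : E (c x) by exists x.
apply: (@DC A E (c x) x1 CE dE Ecx cnz) => k [y hy].
have [->|knz] := eqVneq k 0; first by rewrite mulr0z.
by case: nt1; apply: (tor_divz knz); rewrite hy.
Qed.

End NonTorsion.

Theorem mainTheorem1 (A : zmodType) :
  (exists x : A, x != 0%R) ->
  (torsion_group A \/ non_reduced A) ->
  end_centrally_essential A ->
  end_commutative A.
Proof.
move=> _ hA CE f g hf hg x /=.
have [tA|ntA] := pselect (torsion_group A).
  apply: (torsion_comm CE hf hg); have [n [n0 hn]] := tA x; by exists n.
case: hA => [//|[D [dD [x0 [Dx0 x0nz]]]]].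
have [x1 nt1] : exists x1 : A, ~ tor x1.
  have [//|nx] := pselect (exists x1 : A, ~ tor x1); case: ntA => y.
  have [[n n0 hn]|nty] := pselect (tor y); first by exists n.
  by case: nx; exists y.
exact: (main_nt CE dD Dx0 x0nz nt1 hf hg).
Qed.
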